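(* Let $\mathcal{A}\in\mathbb{C}^{n\times n\times n\times n}$ be a CPS tensor that is also symmetric. Then $\mathcal{A}(x,x,\bar x,\bar x)=\sum_{i,j,k,l}\mathcal{A}_{ijkl}x_ix_j\bar x_k\bar x_l\ge0$ for all $x\in\mathbb{C}^n$ if and only if $\langle X,\mathcal{A}X\rangle\ge0$ for all Hermitian positive semidefinite $X\in\mathbb{C}^{n\times n}$.
   Context: A tensor $\mathcal{A}\in\mathbb{C}^{n\times n\times n\times n}$ is conjugate partial-symmetric (CPS) if $\mathcal{A}_{ijkl}=\overline{\mathcal{A}_{klij}}$ and $\mathcal{A}_{ijkl}=\mathcal{A}_{jikl}=\mathcal{A}_{ijlk}$ for all indices; it is symmetric if its entries are invariant under all permutations of the four indices. For $X\in\mathbb{C}^{n\times n}$, $\langle X,\mathcal{A}X\rangle=\sum_{i,j,k,l}\mathcal{A}_{ijkl}X_{kl}\overline{X_{ij}}$. *)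

(* Defs.v *)
(* The complex field is modelled as  R[i] = complex R
   for an arbitrary real closed field R (ℂ = Rstd[i] is an instance). *)
From HB Require Import structures.
From mathcomp Require Import all_boot all_order all_algebra all_fingroup.
From mathcomp Require Import complex.
Set Implicit Arguments. Unset Strict Implicit. Unset Printing Implicit Defensive.
Import Order.TTheory GRing.Theory Num.Theory.
Local Open Scope ring_scope.

Definition tensor4 (C : Type) (n : nat) := 'I_n -> 'I_n -> 'I_n -> 'I_n -> C.

Definition CPS (C : numClosedFieldType) n (A : tensor4 C n) : Prop :=
  [/\ forall i j k l, A i j k l = (A k l i j)^*,
      forall i j k l, A i j k l = A j i k l
    & forall i j k l, A i j k l = A i j l k].

Definition tensor_at (C : Type) n (A : tensor4 C n) (f : 'I_4 -> 'I_n) : C :=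
  A (f (inord 0)) (f (inord 1)) (f (inord 2)) (f (inord 3)).

Definition symmetric_tensor (C : Type) n (A : tensor4 C n) : Prop :=
  forall (s : 'S_4) (f : 'I_4 -> 'I_n), tensor_at A f = tensor_at A (f \o s).

Definition quartic_form (C : numClosedFieldType) n (A : tensor4 C n)
    (x : 'cV[C]_n) : C :=
  \sum_i \sum_j \sum_k \sum_l A i j k l * x i 0 * x j 0 * (x k 0)^* * (x l 0)^*.

Definition tensor_inner (C : numClosedFieldType) n (A : tensor4 C n)
    (X : 'M[C]_n) : C :=
  \sum_i \sum_j \sum_k \sum_l A i j k l * X k l * (X i j)^*.

Definition herm_psd (C : numClosedFieldType) n (X : 'M[C]_n) : Prop :=
  X^T = map_mx (@Num.conj_op C) X /\
  forall v : 'cV[C]_n, 0 <= ((map_mx (@Num.conj_op C) v)^T *m X *m v) 0 0.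

(* Main.v *)
Require Import Defs.
From HB Require Import structures.
From mathcomp Require Import all_boot all_order all_algebra all_fingroup.
From mathcomp Require Import complex.
From mathcomp Require Import ring sesquilinear spectral.
Set Implicit Arguments. Unset Strict Implicit. Unset Printing Implicit Defensive.
Import Order.TTheory GRing.Theory Num.Theory.
Local Open Scope ring_scope.

Section S.
Variable C : numClosedFieldType.
Variable n : nat.
Variable A : tensor4 C n.
Hypothesis HA1 : forall i j k l, A i j k l = A j i k l.
Hypothesis HA2 : forall i j k l, A i j k l = A i j l k.

Definition G (a b c d : 'I_n -> C) :=
  \sum_i \sum_j \sum_k \sum_l A i j k l * a i * b j * (c k)^* * (d l)^*.

Lemma G12 a b c d : G a b c d = G b a c d.
Proof.
rewrite /G exchange_big; apply: eq_bigr => i _; apply: eq_bigr => j _.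
apply: eq_bigr => k _; apply: eq_bigr => l _; rewrite HA1; ring.
Qed.

Lemma G34 a b c d : G a b c d = G a b d c.
Proof.
rewrite /G; apply: eq_bigr => i _; apply: eq_bigr => j _.
rewrite exchange_big; apply: eq_bigr => k _; apply: eq_bigr => l _; rewrite HA2; ring.
Qed.

Definition sh (y : 'I_n -> C) w x := fun t => y t + w * x t.

Lemma pw (I Aa a b c d e f g h : C) : I * I = -1 ->
  Aa*(a+1*e)*(b+1*f)*(c+1*g)*(d+1*h) + Aa*(a+I*e)*(b+I*f)*(c+(-I)*g)*(d+(-I)*h)
  + Aa*(a+(-1)*e)*(b+(-1)*f)*(c+(-1)*g)*(d+(-1)*h) + Aa*(a+(-I)*e)*(b+(-I)*f)*(c+I*g)*(d+I*h)
  = 4*(Aa*a*b*c*d) + 4*(Aa*e*f*g*h) + 4*(Aa*a*f*c*h) + 4*(Aa*a*f*g*d) + 4*(Aa*e*b*c*h) + 4*(Aa*e*b*g*d).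
Proof.
move=> hI.
transitivity (2 * Aa * (a*b*c*d + I*I*(e*f*c*d - e*g*b*d - e*h*b*c - f*g*a*d - f*h*a*c + g*h*a*b) + (I*I)*(I*I)*(e*f*g*h))
  + 2 * Aa * (a*b*c*d + (e*f*c*d + e*g*b*d + e*h*b*c + f*g*a*d + f*h*a*c + g*h*a*b) + e*f*g*h)); first ring.
rewrite hI; ring.
Qed.

Lemma pw2 (I Aa a b c d e g : C) : I * I = -1 ->
  Aa*(a+1*e)*b*(c+1*g)*d + Aa*(a+I*e)*b*(c+(-I)*g)*d
  + Aa*(a+(-1)*e)*b*(c+(-1)*g)*d + Aa*(a+(-I)*e)*b*(c+I*g)*d
  = 4*(Aa*a*b*c*d) + 4*(Aa*e*b*g*d).
Proof.
move=> hI.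
transitivity (4*(Aa*a*b*c*d) + 2*(Aa*e*b*g*d) - 2 * (I*I) * (Aa*e*b*g*d)); first ring.
rewrite hI; ring.
Qed.

Lemma cshE (a w b : C) : (a + w * b)^* = a^* + w^* * b^*.
Proof. by rewrite rmorphD rmorphM. Qed.

Lemma conjs : [/\ (1:C)^* = 1, ('i : C)^* = -'i, (-1 : C)^* = -1 & (-'i : C)^* = 'i].
Proof.
split.
- exact: rmorph1.
- exact: conjCi.
- by rewrite rmorphN rmorph1.
- by rewrite -conjCi conjCK.
Qed.

Lemma L1 y x :
  G (sh y 1 x) (sh y 1 x) (sh y 1 x) (sh y 1 x)
  + G (sh y 'i x) (sh y 'i x) (sh y 'i x) (sh y 'i x)
  + G (sh y (-1) x) (sh y (-1) x) (sh y (-1) x) (sh y (-1) x)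
  + G (sh y (-'i) x) (sh y (-'i) x) (sh y (-'i) x) (sh y (-'i) x)
  = 4 * G y y y y + 16 * G y x y x + 4 * G x x x x.
Proof.
have -> : 16 * G y x y x = 4 * G y x y x + 4 * G y x x y + 4 * G x y y x + 4 * G x y x y.
  by rewrite -G34 -G12 -G34; ring.
have [c1 ci cm cmi] := conjs.
rewrite /G !mulr_sumr -!big_split /=; apply: eq_bigr => i _.
rewrite !mulr_sumr -!big_split /=; apply: eq_bigr => j _.
rewrite !mulr_sumr -!big_split /=; apply: eq_bigr => k _.
rewrite !mulr_sumr -!big_split /=; apply: eq_bigr => l _.
rewrite /sh !cshE.
rewrite c1 ci cm cmi.
rewrite pw; last exact: mulCii.
ring.
Qed.

Lemma L2 y x w :
  G (sh y 1 x) w (sh y 1 x) w + G (sh y 'i x) w (sh y 'i x) w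
  + G (sh y (-1) x) w (sh y (-1) x) w + G (sh y (-'i) x) w (sh y (-'i) x) w
  = 4 * G y w y w + 4 * G x w x w.
Proof.
have [c1 ci cm cmi] := conjs.
rewrite /G !mulr_sumr -!big_split /=; apply: eq_bigr => i _.
rewrite !mulr_sumr -!big_split /=; apply: eq_bigr => j _.
rewrite !mulr_sumr -!big_split /=; apply: eq_bigr => k _.
rewrite !mulr_sumr -!big_split /=; apply: eq_bigr => l _.
rewrite /sh !cshE c1 ci cm cmi.
rewrite pw2; last exact: mulCii.
ring.
Qed.


Definition Sx (xs : seq ('I_n -> C)) := \sum_(p <- xs) \sum_(q <- xs) G p q p q.
Definition Tx xs y := 2 * G y y y y + 4 * \sum_(p <- xs) G y p y p + Sx xs.

Lemma Sx_cons x xs : Sx (x :: xs) = G x x x x + 2 * \sum_(p <- xs) G x p x p + Sx xs.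
Proof.
rewrite /Sx big_cons big_cons.
under [X in _ + X = _]eq_bigr do rewrite big_cons.
rewrite big_split /=.
have -> : \sum_(p <- xs) G p x p x = \sum_(p <- xs) G x p x p.
  by apply: eq_bigr => p _; rewrite G12 G34.
ring.
Qed.

Lemma Tstep x xs y : 8 * Tx (x :: xs) y = 4 * Tx xs y +
  (Tx xs (sh y 1 x) + Tx xs (sh y 'i x) + Tx xs (sh y (-1) x) + Tx xs (sh y (-'i) x)).
Proof.
have e1 := L1 y x.
have e2 : \sum_(p <- xs) G (sh y 1 x) p (sh y 1 x) p + \sum_(p <- xs) G (sh y 'i x) p (sh y 'i x) p
  + \sum_(p <- xs) G (sh y (-1) x) p (sh y (-1) x) p + \sum_(p <- xs) G (sh y (-'i) x) p (sh y (-'i) x) p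
  = 4 * \sum_(p <- xs) G y p y p + 4 * \sum_(p <- xs) G x p x p.
  rewrite -!big_split !mulr_sumr -big_split; apply: eq_bigr => p _; exact: L2.
rewrite /Tx Sx_cons big_cons.
transitivity (4 * Tx xs y + 2 * (G (sh y 1 x) (sh y 1 x) (sh y 1 x) (sh y 1 x)
  + G (sh y 'i x) (sh y 'i x) (sh y 'i x) (sh y 'i x)
  + G (sh y (-1) x) (sh y (-1) x) (sh y (-1) x) (sh y (-1) x)
  + G (sh y (-'i) x) (sh y (-'i) x) (sh y (-'i) x) (sh y (-'i) x))
  + 4 * (\sum_(p <- xs) G (sh y 1 x) p (sh y 1 x) p + \sum_(p <- xs) G (sh y 'i x) p (sh y 'i x) p
  + \sum_(p <- xs) G (sh y (-1) x) p (sh y (-1) x) p + \sum_(p <- xs) G (sh y (-'i) x) p (sh y (-'i) x) p)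
  + 4 * Sx xs); last by rewrite /Tx; ring.
rewrite e1 e2 /Tx; ring.
Qed.

Lemma Tx_ge0 : (forall v, 0 <= G v v v v) -> forall xs y, 0 <= Tx xs y.
Proof.
move=> HF; elim=> [|x xs IH] y.
  by rewrite /Tx /Sx !big_nil mulr0 !addr0; apply: mulr_ge0; rewrite ?ler0n ?HF.
have : 0 <= 8 * Tx (x :: xs) y.
  by rewrite Tstep; apply: addr_ge0; [apply: mulr_ge0; rewrite ?ler0n ?IH|
    apply: addr_ge0; [apply: addr_ge0; [apply: addr_ge0|]|]; apply: IH].
by rewrite pmulr_rge0 // ltr0n.
Qed.

Lemma Sx_ge0 : (forall v, 0 <= G v v v v) -> forall xs, 0 <= Sx xs.
Proof.
move=> HF xs; have := Tx_ge0 HF xs (fun _ => 0).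
have G0 b c d : G (fun _ => 0) b c d = 0.
  by rewrite /G; do 4! (apply: big1 => ? _); rewrite !(mulr0, mul0r).
by rewrite /Tx !G0 big1 ?mulr0 ?add0r // => p _; rewrite G0.
Qed.

End S.

Lemma sym13 (C : Type) n (A : tensor4 C n) : symmetric_tensor A -> forall i j k l, A i j k l = A k j i l.
Proof.
move=> HS i j k l.
pose f (t : 'I_4) := if val t == 0%N then i else if val t == 1%N then j else if val t == 2%N then k else l.
have := HS (tperm (inord 0) (inord 2)) f.
rewrite /tensor_at /= tpermL tpermR !tpermD; try by rewrite -val_eqE /= !inordK.
by rewrite /f /= !inordK.
Qed.

Lemma swap13 (C : numClosedFieldType) n (f : 'I_n -> 'I_n -> 'I_n -> 'I_n -> C) :
  \sum_i \sum_j \sum_k \sum_l f i j k l = \sum_i \sum_j \sum_k \sum_l f k j i l.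
Proof.
rewrite exchange_big /=.
under eq_bigr do rewrite exchange_big /=.
by rewrite exchange_big.
Qed.

Lemma pull4 (C : numClosedFieldType) n (J : Type) (r : seq J)
  (F : 'I_n -> 'I_n -> 'I_n -> 'I_n -> J -> C) :
  \sum_i \sum_j \sum_k \sum_l \sum_(p <- r) F i j k l p
  = \sum_(p <- r) \sum_i \sum_j \sum_k \sum_l F i j k l p.
Proof.
transitivity (\sum_i \sum_j \sum_k \sum_(p <- r) \sum_l F i j k l p).
  by apply: eq_bigr => i _; apply: eq_bigr => j _; apply: eq_bigr => k _; rewrite exchange_big.
transitivity (\sum_i \sum_j \sum_(p <- r) \sum_k \sum_l F i j k l p).
  by apply: eq_bigr => i _; apply: eq_bigr => j _; rewrite exchange_big.
transitivity (\sum_i \sum_(p <- r) \sum_j \sum_k \sum_l F i j k l p).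
  by apply: eq_bigr => i _; rewrite exchange_big.
by rewrite exchange_big.
Qed.

Lemma dist2 (C : numClosedFieldType) (J : Type) (r : seq J) (a : C) (f g : J -> C) :
  a * (\sum_(p <- r) f p) * (\sum_(q <- r) g q) = \sum_(p <- r) \sum_(q <- r) a * f p * g q.
Proof.
rewrite [a * _]mulr_sumr mulr_suml; apply: eq_bigr => p _.
by rewrite mulr_sumr.
Qed.

Lemma conjM1 (C : numClosedFieldType) (a b : C) : (a * b^*)^* = a^* * b.
Proof. by rewrite rmorphM; congr (_ * _); apply: conjCK. Qed.

Lemma conj_sumM (C : numClosedFieldType) (J : Type) (r : seq J) (f g : J -> C) :
  (\sum_(q <- r) f q * (g q)^*)^* = \sum_(q <- r) (f q)^* * g q.
Proof. by rewrite rmorph_sum; apply: eq_bigr => q _; apply: conjM1. Qed.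

Lemma inner_S (C : numClosedFieldType) n (A : tensor4 C n) (X : 'M[C]_n) us :
  CPS A -> symmetric_tensor A ->
  (forall k l, X k l = \sum_(p <- us) p k * (p l)^*) ->
  tensor_inner A X = Sx A us.
Proof.
move=> [_ HA1 HA2] HS hX.
rewrite /tensor_inner /Sx.
transitivity (\sum_i \sum_j \sum_k \sum_l \sum_(p <- us) \sum_(q <- us)
   A i j k l * p i * q j * (q k)^* * (p l)^*).
  rewrite swap13; apply: eq_bigr => i _; apply: eq_bigr => j _.
  apply: eq_bigr => k _; apply: eq_bigr => l _.
  rewrite !hX conj_sumM dist2; apply: eq_bigr => p _; apply: eq_bigr => q _.
  rewrite (sym13 HS); ring.
rewrite (pull4 us (fun i j k l p => \sum_(q <- us) A i j k l * p i * q j * (q k)^* * (p l)^*)).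
apply: eq_bigr => p _.
rewrite (pull4 us (fun i j k l q => A i j k l * p i * q j * (q k)^* * (p l)^*)).
apply: eq_bigr => q _.
by rewrite (G34 HA2).
Qed.

Local Open Scope sesquilinear_scope.
Lemma psd_decomp (C : numClosedFieldType) n (X : 'M[C]_n) : herm_psd X ->
  exists us : seq ('I_n -> C), forall k l, X k l = \sum_(p <- us) p k * (p l)^*.
Proof.
move=> [hT hP].
have hH : X \is hermsymmx.
  apply/is_hermitianmxP; rewrite expr0 scale1r; apply/matrixP => i j.
  have := congr1 (fun M : 'M[C]_n => M j i) hT; rewrite !mxE => ->.
  by [].
have /orthomx_spectralP hX := hermitian_normalmx hH.
set P := spectralmx X in hX; set d := spectral_diag X in hX.
have Pu : P \is unitarymx by apply: spectral_unitarymx.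
rewrite invmx_unitary // in hX.
have PP : P *m P^t* = 1%:M by apply/unitarymxP.
have hD : P *m X *m P^t* = diag_mx d.
  by rewrite hX !mulmxA PP mul1mx -mulmxA PP mulmx1.
have dge0 p : 0 <= d 0 p.
  have := hP (\col_k (P p k)^*).
  have -> : ((((\col_k (P p k)^*) ^ Num.Def.conjC)%sesqui)^T *m X *m (\col_k (P p k)^*)) 0 0
      = (P *m X *m P^t*) p p.
    rewrite !mxE; apply: eq_bigr => b _; rewrite !mxE; congr (_ * _).
    by apply: eq_bigr => a _; rewrite !mxE conjCK.
  by rewrite hD mxE eqxx mulr1n.
exists [seq (fun k => sqrtC (d 0 p) * (P p k)^*) | p <- index_enum 'I_n].
move=> k l; rewrite big_map {1}hX mul_mx_diag !mxE.
apply: eq_bigr => p _; rewrite !mxE (conjM1 (sqrtC (d 0 p)) (P p l)).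
rewrite [(sqrtC _)^*]geC0_conj ?sqrtC_ge0 //.
transitivity (sqrtC (d 0 p) ^+ 2 * (P p k)^* * P p l); last ring.
by rewrite sqrtCK; ring.
Qed.


Lemma rank1_psd (C : numClosedFieldType) n (x : 'cV[C]_n) :
  herm_psd (\matrix_(k, l) (x k 0 * (x l 0)^*)).
Proof.
split.
  apply/matrixP => k l; rewrite !mxE (conjM1 (x k 0) (x l 0)); ring.
move=> v; rewrite !mxE.
have -> : \sum_j (((v ^ Num.Def.conjC)%sesqui)^T *m \matrix_(k, l) (x k 0 * (x l 0)^*)) 0 j * v j 0
   = (\sum_a x a 0 * (v a 0)^*)^* * (\sum_a x a 0 * (v a 0)^*).
  rewrite conj_sumM mulr_suml; apply: eq_bigr => b _.
  rewrite mxE mulr_suml mulr_sumr; apply: eq_bigr => a _; rewrite !mxE; ring.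
by rewrite mulrC mul_conjC_ge0.
Qed.

Local Close Scope sesquilinear_scope.
Local Open Scope complex_scope.

Theorem theorem5p6 (R : rcfType) (n : nat) (A : tensor4 R[i] n) :
  CPS A -> symmetric_tensor A ->
  ((forall x : 'cV[R[i]]_n, 0 <= quartic_form A x) <->
   (forall X : 'M[R[i]]_n, herm_psd X -> 0 <= tensor_inner A X)).
Proof.
move=> hC hS; have [_ HA1 HA2] := hC.
split.
  move=> HF X hX; have [us hus] := psd_decomp hX.
  rewrite (inner_S hC hS hus); apply: (Sx_ge0 HA1 HA2) => v.
  have := HF (\col_i v i); rewrite /quartic_form /G.
  congr (_ <= _); apply: eq_bigr => i _; apply: eq_bigr => j _.
  apply: eq_bigr => k _; apply: eq_bigr => l _; by rewrite !mxE.
move=> HX x.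
have := HX _ (rank1_psd x).
rewrite (inner_S hC hS (us := [:: fun i => x i 0])); last first.
  by move=> k l; rewrite big_cons big_nil addr0 mxE.
by rewrite /Sx !big_cons !big_nil !addr0.
Qed.
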